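(* Let $\mathcal A$ be an algebra over $k$, $\boldsymbol\sigma\in\mathrm{Aut}^n_{\mathrm{cfo}}(\mathcal A)$ and $\boldsymbol m\in\mathbb Z^n_{>0}$ with $\boldsymbol\sigma^{\boldsymbol m}=\mathbf{id}$. Then $M_{\boldsymbol m}(\mathcal A,\boldsymbol\sigma)$ and $M_{\mathrm{ord}(\boldsymbol\sigma)}(\mathcal A,\boldsymbol\sigma)$ are support-isomorphic.
   Context: $k$ is an algebraically closed field of characteristic $0$; primitive roots of unity $\zeta_n$ are fixed with $\zeta_{mn}^m=\zeta_n$. Algebras need not be associative or unital. $\mathrm{Aut}^n_{\mathrm{cfo}}(\mathcal A)$ is the set of $n$-tuples $\boldsymbol\sigma=(\sigma_1,\dots,\sigma_n)$ of pairwise commuting finite-order automorphisms; $\boldsymbol\sigma^{\boldsymbol m}=\mathbf{id}$ means $\sigma_i^{m_i}=\mathrm{id}$ for all $i$; $\mathrm{ord}(\boldsymbol\sigma)=(\mathrm{ord}(\sigma_1),\dots,\mathrm{ord}(\sigma_n))$. For $\lambda=(l_1,\dots,l_n)\in\mathbb Z^n$, $\mathcal A^{\bar\lambda}=\{u:\sigma_i(u)=\zeta_{m_i}^{l_i}u\ \forall i\}$ and $M_{\boldsymbol m}(\mathcal A,\boldsymbol\sigma)=\bigoplus_{\lambda}\mathcal A^{\bar\lambda}\otimes t^\lambda\subseteq\mathcal A\otimes k[t_1^{\pm1},\dots,t_n^{\pm1}]$, $\mathbb Z^n$-graded. Two $\mathbb Z^n$-graded algebras $\mathcal B,\mathcal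 B'$ are support-isomorphic if there exist an algebra isomorphism $\psi:\mathcal B\to\mathcal B'$ and a group isomorphism $\psi_{\mathrm{su}}$ from the subgroup generated by $\{\lambda:\mathcal B^\lambda\ne0\}$ onto the subgroup generated by $\{\lambda:\mathcal B'^\lambda\ne0\}$ with $\psi(\mathcal B^\lambda)=\mathcal B'^{\psi_{\mathrm{su}}(\lambda)}$ for all $\lambda$ in the former subgroup. *)

(* Defs.v *)
From HB Require Import structures.
From mathcomp Require Import all_boot all_order all_algebra.
From mathcomp Require Import finmap.
From mathcomp.multinomials Require Import monalg.
Set Implicit Arguments. Unset Strict Implicit. Unset Printing Implicit Defensive.
Import Order.TTheory GRing.Theory Num.Theory.
Local Open Scope ring_scope.

(* Lattice Z^n, realised as integer row vectors; coordinate i of l is l ord0 i. *)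
Notation Zn n := ('rV[int]_n).

Definition roots_system (k : fieldType) (zeta : nat -> k) : Prop :=
  (forall N, (0 < N)%N -> N.-primitive_root (zeta N)) /\
  (forall a b, (0 < a)%N -> (0 < b)%N -> zeta (a * b)%N ^+ a = zeta b).

(* A (not necessarily associative or unital) k-algebra: a k-vector space A
   with a bilinear product mulA. *)
Definition bilinear_mul (k : fieldType) (A : lmodType k) (mulA : A -> A -> A) :=
  (forall a, linear (mulA a)) /\ (forall b, linear (fun a => mulA a b)).

Definition is_alg_aut (k : fieldType) (A : lmodType k) (mulA : A -> A -> A)
  (s : A -> A) :=
  [/\ linear s, bijective s & forall x y, s (mulA x y) = mulA (s x) (s y)].

Definition aut_cfo (k : fieldType) (A : lmodType k) (mulA : A -> A -> A) (n : nat)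
  (sigma : 'I_n -> A -> A) :=
  [/\ forall i, is_alg_aut mulA (sigma i),
      forall i j x, sigma i (sigma j x) = sigma j (sigma i x)
    & forall i, exists2 r, (0 < r)%N & forall x, iter r (sigma i) x = x].

Definition pow_id (k : fieldType) (A : lmodType k) (n : nat)
  (sigma : 'I_n -> A -> A) (m : 'I_n -> nat) :=
  forall i x, iter (m i) (sigma i) x = x.

Definition is_ord (k : fieldType) (A : lmodType k) (n : nat)
  (sigma : 'I_n -> A -> A) (o : 'I_n -> nat) :=
  forall i, [/\ (0 < o i)%N, forall x, iter (o i) (sigma i) x = x
    & forall r, (0 < r < o i)%N -> exists x, iter r (sigma i) x != x].

Definition eig (k : fieldType) (zeta : nat -> k) (A : lmodType k) (n : nat)
  (sigma : 'I_n -> A -> A) (m : 'I_n -> nat) (l : Zn n) (u : A) :=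
  forall i, sigma i u = (zeta (m i) ^ (l ord0 i)) *: u.

(* The ambient algebra A (x) k[t_1^{+-1},...,t_n^{+-1}], realised as finitely
   supported functions Z^n -> A ({malg A[Zn n]}); f = sum_l f@_l (x) t^l. *)
Definition mscale (k : fieldType) (A : lmodType k) (n : nat) (c : k)
  (f : {malg A[Zn n]}) : {malg A[Zn n]} :=
  \sum_(l <- msupp f) mkmalgU l (c *: f@_l).

(* (a (x) t^mu)(b (x) t^nu) = ab (x) t^(mu+nu), extended bilinearly. *)
Definition mmul (k : fieldType) (A : lmodType k) (mulA : A -> A -> A) (n : nat)
  (f g : {malg A[Zn n]}) : {malg A[Zn n]} :=
  \sum_(mu <- msupp f) \sum_(nu <- msupp g) mkmalgU (mu + nu) (mulA f@_mu g@_nu).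

(* Membership in M_m(A, sigma) = (+)_l A^{\bar l} (x) t^l. *)
Definition in_loop (k : fieldType) (zeta : nat -> k) (A : lmodType k) (n : nat)
  (sigma : 'I_n -> A -> A) (m : 'I_n -> nat) (f : {malg A[Zn n]}) :=
  forall l, eig zeta sigma m l f@_l.

Definition in_comp (k : fieldType) (zeta : nat -> k) (A : lmodType k) (n : nat)
  (sigma : 'I_n -> A -> A) (m : 'I_n -> nat) (l : Zn n) (f : {malg A[Zn n]}) :=
  eig zeta sigma m l f@_l /\ forall mu, mu != l -> f@_mu = 0.

Definition gen_subgroup (n : nat) (S : Zn n -> Prop) (x : Zn n) : Prop :=
  forall P : Zn n -> Prop, P 0 -> (forall a b, P a -> P b -> P (a - b)) ->
    (forall a, S a -> P a) -> P x.

(* Support-isomorphism between two Z^n-graded subalgebras B, B' of the ambient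
   algebra, given by their carriers and their homogeneous components. *)
Definition support_iso (k : fieldType) (A : lmodType k) (mulA : A -> A -> A)
  (n : nat) (inB inB' : {malg A[Zn n]} -> Prop)
  (compB compB' : Zn n -> {malg A[Zn n]} -> Prop) : Prop :=
  let supp (C : Zn n -> {malg A[Zn n]} -> Prop) :=
    fun l => exists2 f, C l f & f != 0 in
  let G := gen_subgroup (supp compB) in
  let G' := gen_subgroup (supp compB') in
  exists (psi : {malg A[Zn n]} -> {malg A[Zn n]}) (psu : Zn n -> Zn n),
    (
     (forall f, inB f -> inB' (psi f)) /\
     (forall c f g, inB f -> inB g ->
        psi (mscale c f + g) = mscale c (psi f) + psi g) /\
     (forall f g, inB f -> inB g -> psi (mmul mulA f g) = mmul mulA (psi f) (psi g)) /\
     (forall f g, inB f -> inB g -> psi f = psi g -> f = g) /\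
     (forall f', inB' f' -> exists2 f, inB f & psi f = f')) /\
    (
     (forall a b, G a -> G b -> psu (a + b) = psu a + psu b) /\
     (forall a, G a -> G' (psu a)) /\
     (forall a b, G a -> G b -> psu a = psu b -> a = b) /\
     (forall b, G' b -> exists2 a, G a & psu a = b)) /\
    (
     forall l, G l -> forall f',
       compB' (psu l) f' <-> exists2 f, compB l f & psi f = f').

(* Main.v *)
Require Import Defs.
From HB Require Import structures.
From mathcomp Require Import all_boot all_order all_algebra.
From mathcomp Require Import finmap.
From mathcomp.multinomials Require Import monalg.
Import GRing.Theory.
Set Implicit Arguments. Unset Strict Implicit. Unset Printing Implicit Defensive.
Local Open Scope ring_scope.

Lemma coefU_sum (K : choiceType) (G : zmodType) (I : Type) (s : seq I)
  (e : I -> K) (a : I -> G) x :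
  (\sum_(i <- s) << a i *g e i >>)@_x = \sum_(i <- s) a i *+ (e i == x).
Proof.
rewrite (raddf_sum (mcoeff x)); apply: eq_bigr => i _; exact: mcoeffU.
Qed.

Lemma sum_ind (K : eqType) (G : zmodType) (s : seq K) (F : K -> G) a :
  uniq s -> (a \notin s -> F a = 0) ->
  \sum_(i <- s) F i *+ (i == a) = F a.
Proof.
move=> us Ha; case: (boolP (a \in s)) => ain.
  rewrite (bigD1_seq a) //= eqxx mulr1n big1 ?addr0 // => i /negbTE ->.
  by rewrite mulr0n.
rewrite Ha // big1_seq // => i /andP [_ iin].
by have -> : (i == a) = false by apply/eqP => E; rewrite -E iin in ain.
Qed.

Lemma big_sup (K : eqType) (G : zmodType) (s S : seq K) (F : K -> G) :
  uniq s -> uniq S -> {subset s <= S} ->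
  (forall i, i \in S -> i \notin s -> F i = 0) ->
  \sum_(i <- s) F i = \sum_(i <- S) F i.
Proof.
move=> us uS sub H0.
rewrite [RHS](bigID (fun i => i \in s)) /= [X in _ = _ + X]big1_seq ?addr0; last first.
  by move=> i /andP [/= ni iS]; apply: H0.
rewrite -[RHS]big_filter; apply: perm_big; apply: uniq_perm => //.
  exact: filter_uniq.
by move=> i; rewrite mem_filter; case: (boolP (i \in s)) => // /sub ->.
Qed.

Lemma mscaleE (k : fieldType) (A : lmodType k) (n : nat) c (f : {malg A[Zn n]}) x :
  (mscale c f)@_x = c *: f@_x.
Proof.
rewrite /mscale coefU_sum (eq_bigr (fun l => c *: f@_l *+ (l == x))) //.
rewrite sum_ind ?fset_uniq // => /mcoeff_outdom ->; by rewrite scaler0.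
Qed.

Lemma mmulE (k : fieldType) (A : lmodType k) (mulA : A -> A -> A) (n : nat)
  (f g : {malg A[Zn n]}) x :
  (Defs.mmul mulA f g)@_x = \sum_(mu <- msupp f) \sum_(nu <- msupp g)
      mulA f@_mu g@_nu *+ (mu + nu == x).
Proof.
rewrite /Defs.mmul (raddf_sum (mcoeff x)); apply: eq_bigr => mu _.
exact: coefU_sum.
Qed.

Definition Dv n (d : 'I_n -> nat) (l : Zn n) : bool :=
  [forall i, ((d i)%:Z %| l ord0 i)%Z].
Definition mulD n (d : 'I_n -> nat) (y : Zn n) : Zn n :=
  \row_i (y ord0 i * (d i)%:Z).
Definition pD n (d : 'I_n -> nat) (l : Zn n) : Zn n :=
  \row_i (l ord0 i %/ (d i)%:Z)%Z.
Definition psiM n (d : 'I_n -> nat) (G : zmodType) (f : {malg G[Zn n]}) :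
  {malg G[Zn n]} := \sum_(l <- msupp f) << f@_l *g pD d l >>.
Definition phiM n (d : 'I_n -> nat) (G : zmodType) (f : {malg G[Zn n]}) :
  {malg G[Zn n]} := \sum_(l <- msupp f) << f@_l *g mulD d l >>.
Definition SD n (d : 'I_n -> nat) (G : zmodType) (f : {malg G[Zn n]}) :=
  forall x, ~~ Dv d x -> f@_x = 0.

Lemma pDK n (d : 'I_n -> nat) : (forall i, (0 < d i)%N) ->
  forall y, pD d (mulD d y) = y.
Proof.
move=> hd y; apply/rowP => i; rewrite !mxE mulzK //.
by rewrite eqz_nat -lt0n hd.
Qed.

Lemma mulDK n (d : 'I_n -> nat) l : Dv d l -> mulD d (pD d l) = l.
Proof.
move=> /forallP H; apply/rowP => i; rewrite !mxE. rewrite divzK //; exact: H.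

Qed.

Lemma mulD_inj n (d : 'I_n -> nat) : (forall i, (0 < d i)%N) -> injective (mulD d).
Proof. by move=> hd a b E; rewrite -(pDK hd a) E pDK. Qed.

Lemma Dv_mulD n (d : 'I_n -> nat) y : Dv d (mulD d y).
Proof. by apply/forallP => i; rewrite mxE dvdz_mull. Qed.

Lemma DvB n (d : 'I_n -> nat) a b : Dv d a -> Dv d b -> Dv d (a - b).
Proof.
move=> /forallP Ha /forallP Hb; apply/forallP => i; rewrite !mxE.
exact: rpredB.
Qed.

Lemma DvD n (d : 'I_n -> nat) a b : Dv d a -> Dv d b -> Dv d (a + b).
Proof.
move=> /forallP Ha /forallP Hb; apply/forallP => i; rewrite !mxE.
exact: rpredD.
Qed.

Lemma mulDD n (d : 'I_n -> nat) a b : mulD d (a + b) = mulD d a + mulD d b.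
Proof. by apply/rowP => i; rewrite !mxE mulrDl. Qed.

Lemma mulDB n (d : 'I_n -> nat) a b : mulD d (a - b) = mulD d a - mulD d b.
Proof. by apply/rowP => i; rewrite !mxE mulrBl. Qed.

Lemma mulD0 n (d : 'I_n -> nat) : mulD d 0 = 0.
Proof. by apply/rowP => i; rewrite !mxE mul0r. Qed.

Lemma SD_supp n (d : 'I_n -> nat) (G : zmodType) (f : {malg G[Zn n]}) l :
  SD d f -> l \in msupp f -> Dv d l.
Proof.
move=> H; rewrite -mcoeff_neq0; apply: contraR => nl; by rewrite H.
Qed.

Lemma psiE n (d : 'I_n -> nat) (G : zmodType) (f : {malg G[Zn n]}) y :
  (forall i, (0 < d i)%N) -> SD d f -> (psiM d f)@_y = f@_(mulD d y).
Proof.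
move=> hd H; rewrite /psiM coefU_sum.
rewrite (eq_big_seq (fun l => f@_l *+ (l == mulD d y))); last first.
  move=> l /(SD_supp H) Dl.
  have -> : (pD d l == y) = (l == mulD d y) by
    apply/eqP/eqP => [<-|->]; [rewrite mulDK | rewrite pDK].
  by [].
by rewrite sum_ind ?fset_uniq // => /mcoeff_outdom.
Qed.

Lemma phiE1 n (d : 'I_n -> nat) (G : zmodType) (g : {malg G[Zn n]}) y :
  (forall i, (0 < d i)%N) -> (phiM d g)@_(mulD d y) = g@_y.
Proof.
move=> hd; rewrite /phiM coefU_sum.
rewrite (eq_bigr (fun l => g@_l *+ (l == y))); last first.
  by move=> l _; rewrite (inj_eq (mulD_inj hd)).
by rewrite sum_ind ?fset_uniq // => /mcoeff_outdom.
Qed.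

Lemma SD_phi n (d : 'I_n -> nat) (G : zmodType) (g : {malg G[Zn n]}) :
  SD d (phiM d g).
Proof.
move=> x nx; rewrite /phiM coefU_sum big1 // => l _.
have -> : (mulD d l == x) = false.
  by apply/eqP => E; rewrite -E Dv_mulD in nx.
by rewrite mulr0n.
Qed.

Lemma psi_phi n (d : 'I_n -> nat) (G : zmodType) (g : {malg G[Zn n]}) :
  (forall i, (0 < d i)%N) -> psiM d (phiM d g) = g.
Proof.
move=> hd; apply/malgP => y; rewrite psiE //; last exact: SD_phi.
exact: phiE1.
Qed.

Lemma psi_supp n (d : 'I_n -> nat) (G : zmodType) (f : {malg G[Zn n]}) mu :
  (forall i, (0 < d i)%N) -> SD d f ->
  mu \in msupp (psiM d f) -> mu \in map (pD d) (msupp f).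
Proof.
move=> hd H; rewrite -mcoeff_neq0 psiE // mcoeff_neq0 => Hin.
by rewrite -(pDK hd mu); apply: map_f.
Qed.

Opaque psiM phiM.

Lemma map_pD_uniq n (d : 'I_n -> nat) (G : zmodType) (f : {malg G[Zn n]}) :
  SD d f -> uniq (map (pD d) (msupp f)).
Proof.
move=> H; rewrite map_inj_in_uniq ?fset_uniq // => a b /(SD_supp H) Da /(SD_supp H) Db E.
by rewrite -(mulDK Da) E mulDK.
Qed.

Lemma SD_lin (k : fieldType) (A : lmodType k) n (d : 'I_n -> nat) c
  (f g : {malg A[Zn n]}) : SD d f -> SD d g -> SD d (Defs.mscale c f + g).
Proof.
by move=> Hf Hg x nx; rewrite mcoeffD mscaleE Hf // Hg // scaler0 addr0.
Qed.

Lemma psi_lin (k : fieldType) (A : lmodType k) n (d : 'I_n -> nat) c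
  (f g : {malg A[Zn n]}) : (forall i, (0 < d i)%N) -> SD d f -> SD d g ->
  psiM d (Defs.mscale c f + g) = Defs.mscale c (psiM d f) + psiM d g.
Proof.
move=> hd Hf Hg; apply/malgP => y.
rewrite psiE //; last exact: SD_lin.
rewrite !mcoeffD !mscaleE. congr (_ + _); first congr (_ *: _); by rewrite psiE.
Qed.


Lemma SD_mul (k : fieldType) (A : lmodType k) (mulA : A -> A -> A) n
  (d : 'I_n -> nat) (f g : {malg A[Zn n]}) :
  SD d f -> SD d g -> SD d (Defs.mmul mulA f g).
Proof.
move=> Hf Hg x nx. rewrite mmulE. rewrite big1_seq // => mu /andP [_ /(SD_supp Hf) Dmu].
rewrite big1_seq // => nu /andP [_ /(SD_supp Hg) Dnu].
have -> : (mu + nu == x) = false.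
  by apply/eqP => E; rewrite -E DvD in nx.
by rewrite mulr0n.
Qed.


Lemma psi_mul (k : fieldType) (A : lmodType k) (mulA : A -> A -> A) n
  (d : 'I_n -> nat) (f g : {malg A[Zn n]}) :
  (forall i, (0 < d i)%N) ->
  (forall b, mulA 0 b = 0) -> (forall a, mulA a 0 = 0) ->
  SD d f -> SD d g ->
  psiM d (Defs.mmul mulA f g) = Defs.mmul mulA (psiM d f) (psiM d g).
Proof.
move=> hd m0 m0' Hf Hg; apply/malgP => y.
rewrite (psiE _ hd (SD_mul mulA Hf Hg)).
rewrite !mmulE.
rewrite [RHS](@big_sup _ _ _ (map (pD d) (msupp f))); first last.
- move=> i _ /mcoeff_outdom ->; rewrite big1 // => nu _.
  by rewrite m0 mul0rn.
- by move=> i Hi; exact: (psi_supp hd Hf Hi).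
- exact: map_pD_uniq.
- exact: fset_uniq.
rewrite big_map; apply: eq_big_seq => mu /(SD_supp Hf) Dmu.
rewrite [RHS](@big_sup _ _ _ (map (pD d) (msupp g))); first last.
- move=> i _ /mcoeff_outdom ->.
  by rewrite m0' mul0rn.
- by move=> i Hi; exact: (psi_supp hd Hg Hi).
- exact: map_pD_uniq.
- exact: fset_uniq.
rewrite big_map; apply: eq_big_seq => nu /(SD_supp Hg) Dnu.
rewrite (psiE _ hd Hf) (psiE _ hd Hg) !mulDK //.
have -> : (pD d mu + pD d nu == y) = (mu + nu == mulD d y).
  by rewrite -(inj_eq (mulD_inj hd)) mulDD !mulDK.
by [].
Qed.



Lemma lin0 (k : fieldType) (A : lmodType k) (s : A -> A) : linear s -> s 0 = 0.
Proof.
move=> H; have := H 1 0 0; rewrite !scale1r addr0 => /eqP.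
by rewrite -subr_eq subrr eq_sym => /eqP.
Qed.

Lemma linZ (k : fieldType) (A : lmodType k) (s : A -> A) : linear s ->
  forall c u, s (c *: u) = c *: s u.
Proof.
by move=> H c u; have := H c u 0; rewrite !addr0 lin0 // addr0.
Qed.

Lemma iter_eig (k : fieldType) (A : lmodType k) (s : A -> A) c u : linear s ->
  s u = c *: u -> forall r, iter r s u = c ^+ r *: u.
Proof.
move=> H Hu; elim=> [|r IH] /=; first by rewrite expr0 scale1r.
by rewrite IH linZ // Hu scalerA exprSr.
Qed.

Lemma prim_int (k : fieldType) (z : k) (N : nat) : N.-primitive_root z ->
  forall e : int, z ^ e = 1 -> (N%:Z %| e)%Z.
Proof.
move=> pz [p|p] /=.
  rewrite -exprnP => /eqP; rewrite -(prim_order_dvd pz) => H; exact: H.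
move=> H; have : (z ^+ p.+1)^-1 == 1 by apply/eqP; exact: H.
rewrite invr_eq1 -(prim_order_dvd pz) => H'; exact: H'.
Qed.


Lemma iter_mul (T : Type) (f : T -> T) o x : iter o f x = x ->
  forall q, iter (q * o) f x = x.
Proof. by move=> H; elim=> [|q IH] //; rewrite mulSn iterD IH H. Qed.

Lemma o_dvd (T : eqType) (f : T -> T) (m o : nat) :
  (0 < o)%N -> (forall x, iter o f x = x) ->
  (forall r, (0 < r < o)%N -> exists x, iter r f x != x) ->
  (forall x, iter m f x = x) -> (o %| m)%N.
Proof.
move=> o0 Ho Hmin Hm; rewrite /dvdn; case: (posnP (m %% o)) => [/eqP //|pos].
have [x /eqP Hx] := Hmin (m %% o)%N (ltac:(by rewrite pos ltn_pmod)).
exfalso; apply: Hx; rewrite -{1}(iter_mul (Ho x) (m %/ o)) -iterD addnC -divn_eq.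
exact: Hm.
Qed.

Lemma zeta_rel (k : fieldType) (zeta : nat -> k) (m o d : nat) (y : int) :
  roots_system zeta -> (0 < d)%N -> (0 < o)%N -> m = (d * o)%N ->
  zeta m ^ (y * d%:Z) = zeta o ^ y.
Proof.
move=> [_ R] d0 o0 ->; rewrite mulrC -exprz_exp -exprnP R //.
Qed.

Lemma eig_D (k : fieldType) (zeta : nat -> k) (A : lmodType k) n
  (sigma : 'I_n -> A -> A) (m o : 'I_n -> nat) (l : Zn n) (u : A) :
  roots_system zeta ->
  (forall i, linear (sigma i)) ->
  (forall i, (0 < o i)%N) -> (forall i, (0 < m i)%N) ->
  (forall i x, iter (o i) (sigma i) x = x) ->
  (forall i, m i = (m i %/ o i) * o i)%N ->
  u != 0 -> eig zeta sigma m l u -> Dv (fun i => m i %/ o i)%N l.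
Proof.
move=> [P _] lin o0 m0 Ho Hm nu He; apply/forallP => i.
have := iter_eig (lin i) (He i) (o i); rewrite Ho => /eqP.
rewrite eq_sym -subr_eq0 -{2}(scale1r u) -scalerBl scaler_eq0 (negbTE nu) orbF.
rewrite subr_eq0 exprnP exprz_exp => /eqP /(prim_int (P _ (m0 i))).
rewrite [X in (X %| _)%Z](_ : _ = (m i %/ o i)%N%:Z * (o i)%:Z); last first.
  by rewrite -PoszM -Hm.
rewrite dvdz_mul2r // ?eqz_nat -?lt0n ?o0 //.
Qed.

Lemma eig_mulD (k : fieldType) (zeta : nat -> k) (A : lmodType k) n
  (sigma : 'I_n -> A -> A) (m o : 'I_n -> nat) (y : Zn n) (u : A) :
  roots_system zeta ->
  (forall i, (0 < o i)%N) -> (forall i, (0 < m i)%N) ->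
  (forall i, m i = (m i %/ o i) * o i)%N ->
  eig zeta sigma m (mulD (fun i => m i %/ o i)%N y) u <-> eig zeta sigma o y u.
Proof.
move=> R o0 m0 Hm.
have d0 : forall i, (0 < m i %/ o i)%N.
  move=> i; rewrite lt0n; apply/eqP => E; have := m0 i; by rewrite Hm E.
split=> H i; have := H i; by rewrite mxE (zeta_rel _ R (d0 i) (o0 i) (Hm i)).
Qed.

Lemma eig0 (k : fieldType) (zeta : nat -> k) (A : lmodType k) n
  (sigma : 'I_n -> A -> A) (m : 'I_n -> nat) l :
  (forall i, linear (sigma i)) -> eig zeta sigma m l 0.
Proof. by move=> lin i; rewrite lin0 // scaler0. Qed.

Unset Implicit Arguments.

Theorem lemma2p2p4 (k : closedFieldType) (zeta : nat -> k)
  (A : lmodType k) (mulA : A -> A -> A) (n : nat)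
  (sigma : 'I_n -> A -> A) (m o : 'I_n -> nat) :
  [pchar k] =i pred0 ->
  roots_system zeta ->
  bilinear_mul mulA ->
  aut_cfo mulA sigma ->
  (forall i, (0 < m i)%N) ->
  pow_id sigma m ->
  is_ord sigma o ->
  support_iso mulA (in_loop zeta sigma m) (in_loop zeta sigma o)
    (in_comp zeta sigma m) (in_comp zeta sigma o).
Proof.
move=> _ R [bl br] [aut_i _ _] m0 pw ord.
have lin : forall i, linear (sigma i) by move=> i; have [] := aut_i i.
have o0 : forall i, (0 < o i)%N by move=> i; have [] := ord i.
have Ho : forall i x, iter (o i) (sigma i) x = x by move=> i; have [] := ord i.
have dv : forall i, (o i %| m i)%N.
  by move=> i; have [o0' Ho' Hmin] := ord i; apply: o_dvd => //; exact: pw.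
have Hm : forall i, m i = (m i %/ o i * o i)%N by move=> i; rewrite divnK.
pose d := fun i => (m i %/ o i)%N.
have hd : forall i, (0 < d i)%N.
  move=> i; rewrite lt0n; apply/eqP => E; have := m0 i; rewrite Hm; by move: E; rewrite /d => ->.
have m0A : forall b, mulA 0 b = 0 by move=> b; exact: (lin0 (br b)).
have mA0 : forall a, mulA a 0 = 0 by move=> a; exact: (lin0 (bl a)).
have loopSD : forall f, in_loop zeta sigma m f -> SD d f.
  move=> f Hf x nx; apply/eqP; apply: contraNT nx => nz.
  exact: (eig_D R lin o0 m0 Ho Hm nz (Hf x)).
have suppD : forall l, (exists2 f, in_comp zeta sigma m l f & f != 0) -> Dv d l.
  move=> l [f [He Hz] nf]; apply: (eig_D R lin o0 m0 Ho Hm _ He).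
  apply: contra nf => /eqP fl; apply/eqP/malgP => x; rewrite mcoeff0.
  by case: (eqVneq x l) => [->|/Hz].
have EM : forall y u, eig zeta sigma m (mulD d y) u <-> eig zeta sigma o y u.
  by move=> y u; apply: eig_mulD.
have Dv0 : Dv d 0 by apply/forallP => i; rewrite mxE dvdz0.
have pDD : forall a b, Dv d a -> Dv d b -> pD d (a + b) = pD d a + pD d b.
  move=> a b Da Db; apply: (mulD_inj hd).
  by rewrite mulDD !mulDK // DvD.
have pDB : forall a b, Dv d a -> Dv d b -> pD d (a - b) = pD d a - pD d b.
  move=> a b Da Db; apply: (mulD_inj hd).
  by rewrite mulDB !mulDK // DvB.
have pD0 : pD d 0 = 0 by apply: (mulD_inj hd); rewrite mulDK // mulD0.
have comp_iff : forall l, Dv d l -> forall f',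
    in_comp zeta sigma o (pD d l) f' <->
    exists2 f, in_comp zeta sigma m l f & psiM d f = f'.
  move=> l Dl f'; split.
    move=> [H1 H2]; exists (phiM d f'); last exact: psi_phi.
    split.
      by rewrite -(mulDK Dl) phiE1 //; apply/EM.
    move=> mu nmu; case: (boolP (Dv d mu)) => Dmu; last exact: SD_phi.
    rewrite -(mulDK Dmu) phiE1 //; apply: H2; apply: contra nmu => /eqP E.
    by rewrite -(mulDK Dmu) E mulDK.
  move=> [f [H1 H2] <-].
  have Sf : SD d f.
    move=> x nx; apply: H2; apply: contra nx => /eqP ->; exact: Dl.
  split.
    rewrite (psiE _ hd Sf) mulDK //; apply/EM; rewrite mulDK //.
  move=> mu nmu; rewrite (psiE _ hd Sf); apply: H2; apply: contra nmu => /eqP <-.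
  by rewrite pDK.
have psi_inj : forall f g : {malg A[Zn n]}, SD d f -> SD d g -> psiM d f = psiM d g -> f = g.
  move=> f g Sf Sg E; apply/malgP => x.
  case: (boolP (Dv d x)) => Dx; last by rewrite Sf // Sg.
  by rewrite -(mulDK Dx) -(psiE _ hd Sf) -(psiE _ hd Sg) E.
have SD0 : SD d (0 : {malg A[Zn n]}) by move=> x _; rewrite mcoeff0.
have psi0 : psiM d (0 : {malg A[Zn n]}) = 0.
  by apply/malgP => y; rewrite (psiE _ hd SD0) !mcoeff0.
rewrite /support_iso.
set G := gen_subgroup (fun l => exists2 f : {malg A[Zn n]}, in_comp zeta sigma m l f & f != 0).
set G' := gen_subgroup (fun l => exists2 f : {malg A[Zn n]}, in_comp zeta sigma o l f & f != 0).
have GD : forall l, G l -> Dv d l.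
  move=> l Gl; exact: (Gl (fun x => is_true (Dv d x)) Dv0 (@DvB _ d) suppD).
exists (fun f => psiM d f), (pD d); split; [|split].
- split; [|split; [|split; [|split]]].
  + move=> f Hf y; rewrite (psiE _ hd (loopSD _ Hf)); apply/EM; exact: Hf.
  + move=> c f g Hf Hg; exact: (psi_lin c hd (loopSD _ Hf) (loopSD _ Hg)).
  + move=> f g Hf Hg; exact: (psi_mul hd m0A mA0 (loopSD _ Hf) (loopSD _ Hg)).
  + move=> f g Hf Hg; exact: (psi_inj _ _ (loopSD _ Hf) (loopSD _ Hg)).
  + move=> f' Hf'; exists (phiM d f'); last exact: psi_phi.
    move=> x; case: (boolP (Dv d x)) => Dx.
      by rewrite -(mulDK Dx) phiE1 //; apply/EM; exact: Hf'.
    by rewrite (SD_phi _ Dx); exact: eig0.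
- split; [|split; [|split]].
  + by move=> a b /GD Da /GD Db; exact: pDD.
  + move=> a Ga.
    suff : Dv d a /\ G' (pD d a) by case.
    apply: (Ga (fun a => Dv d a /\ G' (pD d a))).
    * by split; rewrite ?pD0 // => P P0 _ _.
    * move=> a1 b1 [Da Ha] [Db Hb]; split; first exact: DvB.
      rewrite pDB // => P P0 PB PS; apply PB; [exact: (Ha P P0 PB PS) | exact: (Hb P P0 PB PS)].
    * move=> l Hl; have Dl := suppD l Hl; split => // P _ _ PS; apply: PS.
      case: Hl => f Hf nf; exists (psiM d f).
        by apply/(comp_iff l Dl); exists f.
      apply: contra nf => /eqP E; apply/eqP.
      have Sf : SD d f.
        by case: Hf => _ H2 x nx; apply: H2; apply: contra nx => /eqP ->.
      exact: (psi_inj f 0 Sf SD0 (etrans E (esym psi0))).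
  + by move=> a b /GD Da /GD Db E; rewrite -(mulDK Da) E mulDK.
  + move=> b Gb; exists (mulD d b); last exact: pDK.
    apply: (Gb (fun b => G (mulD d b))).
    * by rewrite mulD0 => P P0 _ _.
    * move=> a1 b1 Ha Hb; rewrite mulDB => P P0 PB PS; apply PB; [exact: (Ha P P0 PB PS) | exact: (Hb P P0 PB PS)].
    * move=> l [f' Hf' nf'] P _ _ PS; apply: PS.
      have := (comp_iff (mulD d l) (Dv_mulD _ _) f').1; rewrite (pDK hd) => /(_ Hf').
      case=> f Hf E; exists f => //; apply: contra nf' => /eqP f0.
      by rewrite -E f0 psi0.
- by move=> l /GD Dl f'; exact: comp_iff.
Qed.
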